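(* Let $X$ be a random variable in a sublinear expectation space and let $\{X^\alpha:\alpha\in\mathcal A\}$ be a family of random variables on a classical probability space $(\Omega',\mathcal F,P)$. Suppose that $$\hat{\mathbb E}[\varphi(X)]=\sup_{\alpha\in\mathcal A}E_P[\varphi(X^\alpha)]\quad\text{for all }\varphi\in C_{l.Lip}(\mathbb R).$$ Then for every continuity point $y$ of the upper cdf $\overline F_X$, $$\overline F_X(y)=\sup_{\alpha\in\mathcal A}P(X^\alpha\le y),$$ and for every continuity point $y$ of the lower cdf $\underline F_X$, $$\underline F_X(y)=\inf_{\alpha\in\mathcal A}P(X^\alpha\le y).$$
   Context: Sublinear expectation $\hat{\mathbb E}[Z]=\sup_{Q\in\mathcal P}E_Q[Z]$ for a family $\mathcal P$ of probability measures on $(\Omega,\mathcal F_0)$, defined in particular on indicators: upper probability $\mathbb V(A)=\hat{\mathbb E}[\mathbf 1_A]=\sup_{Q\in\mathcal P}Q(A)$. Upper cdf $\overline F_X(y)=\hat{\mathbb E}[\mathbf 1_{\{X\le y\}}]$; lower cdf $\underline F_X(y)=-\hat{\mathbb E}[-\mathbf 1_{\{X\le y\}}]$. $C_{l.Lip}(\mathbb R)$: functions with $|\varphi(x)-\varphi(y)|\le C_\varphi(1+|x|^k+|y|^k)|x-y|$ for some $k\in\mathbb N$, $C_\varphi>0$. *)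

(* Defs.v *)
From HB Require Import structures.
From mathcomp Require Import all_boot all_order all_algebra.
From mathcomp Require Import all_classical all_reals all_analysis.
Set Implicit Arguments. Unset Strict Implicit. Unset Printing Implicit Defensive.
Import Order.TTheory GRing.Theory Num.Theory.
Import numFieldNormedType.Exports.
Local Open Scope classical_set_scope.
Local Open Scope ring_scope.

Definition sublin_exp {d} {T : measurableType d} {R : realType}
  (Pset : set (probability T R)) (Z : T -> \bar R) : \bar R :=
  ereal_sup [set (\int[Q]_w Z w)%E | Q in Pset].

Definition upper_cdf {d} {T : measurableType d} {R : realType}
  (Pset : set (probability T R)) (X : T -> R) (y : R) : R :=
  fine (sublin_exp Pset (fun w => (\1_[set w | X w <= y] w)%:E)).

Definition lower_cdf {d} {T : measurableType d} {R : realType}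
  (Pset : set (probability T R)) (X : T -> R) (y : R) : R :=
  fine (- sublin_exp Pset (fun w => (- (\1_[set w | X w <= y] w)%:E)%E))%E.

Definition Clip {R : realType} (phi : R -> R) : Prop :=
  exists (C : R) (k : nat), 0 < C /\
    forall x y, `|phi x - phi y| <= C * (1 + `|x| ^+ k + `|y| ^+ k) * `|x - y|.

(* Main.v *)
Require Import Defs.
From HB Require Import structures.
From mathcomp Require Import all_boot all_order all_algebra.
From mathcomp Require Import all_classical all_reals all_analysis.
From mathcomp Require Import ring lra measurable_realfun.
Import Order.TTheory GRing.Theory Num.Theory.
Import numFieldNormedType.Exports.
Local Open Scope classical_set_scope.
Local Open Scope ring_scope.
Set Implicit Arguments. Unset Strict Implicit.

Section H.
Variable R : realType.

Definition hcl (t : R) : R := if t <= 0 then 0 else if t <= 1 then t else 1.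

Lemma hcl_mono s t : s <= t -> 0 <= hcl t - hcl s <= t - s.
Proof.
rewrite /hcl => st; apply/andP.
repeat case: ifP => ?;
repeat match goal with H : (_ <= _) = false |- _ => move/negbT: H; rewrite -ltNge => H end;
split; lra.
Qed.

Lemma hcl_lip s t : `|hcl s - hcl t| <= `|s - t|.
Proof.
wlog st : s t / s <= t => [W|].
  by case: (leP s t) => [/W//|/ltW/W]; rewrite distrC (distrC s).
have /andP[h1 h2] := @hcl_mono _ _ st.
by rewrite distrC (distrC s) !ger0_norm // subr_ge0.
Qed.

Lemma lip_cont (f : R -> R) (L : R) : 0 < L ->
  (forall x z, `|f x - f z| <= L * `|x - z|) -> continuous f.
Proof.
move=> L0 H x; apply/cvgrPdist_lt => e e0.
apply/nbhs_ballP; exists (e / L) => /=; first by rewrite divr_gt0.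
move=> z; rewrite /ball /= => xz.
apply: le_lt_trans (H x z) _.
by rewrite -ltr_pdivlMl // mulrC.
Qed.


Definition ramp (a b x : R) : R := hcl ((b - x) / (b - a)).

Lemma ramp_lip a b : a < b -> forall x z,
  `|ramp a b x - ramp a b z| <= (b - a)^-1 * `|x - z|.
Proof.
move=> ab x z; apply: le_trans (hcl_lip _ _) _.
have h : 0 < b - a by rewrite subr_gt0.
rewrite -mulrBl normrM (ger0_norm (x := (b - a)^-1)); last by rewrite invr_ge0 ltW.
rewrite mulrC; apply: ler_wpM2l; first by rewrite ltW // invr_gt0.
by rewrite (_ : b - x - (b - z) = z - x) 1?distrC // opprB addrC addrA subrK.
Qed.

Lemma ramp_cont a b : a < b -> continuous (ramp a b).
Proof.
move=> ab; apply: (@lip_cont _ ((b - a)^-1)); last exact: ramp_lip.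
by rewrite invr_gt0 subr_gt0.
Qed.

Lemma ramp_meas a b : a < b -> measurable_fun setT (ramp a b).
Proof. by move=> ab; apply: continuous_measurable_fun; exact: ramp_cont. Qed.

Lemma ramp_Clip a b : a < b -> Clip (ramp a b).
Proof.
move=> ab; exists ((b - a)^-1), 0%N; split; first by rewrite invr_gt0 subr_gt0.
move=> x z; apply: (le_trans (@ramp_lip a b ab x z)).
rewrite !expr0; apply: ler_wpM2r => //.
rewrite ler_peMr ?invr_ge0 ?subr_ge0 ?ltW //; lra.
Qed.

Lemma hcl_ge0 t : 0 <= hcl t.
Proof. by rewrite /hcl; repeat case: ifP => ?; rewrite //; lra. Qed.

Lemma ramp_ge0 a b x : 0 <= ramp a b x.
Proof. exact: hcl_ge0. Qed.

Lemma ind_le_ramp a b x : a < b ->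
  \1_[set x | x <= a] x <= ramp a b x.
Proof.
move=> ab; rewrite indicE; case: (boolP (x \in _)); last by rewrite ramp_ge0.
rewrite inE /= => xa.
have h : 0 < b - a by rewrite subr_gt0.
have s1 : 1 <= (b - x) / (b - a) by rewrite ler_pdivlMr // mul1r; lra.
rewrite /ramp /hcl; repeat case: ifP => ?; lra.
Qed.

Lemma ramp_le_ind a b x : a < b ->
  ramp a b x <= \1_[set x | x <= b] x.
Proof.
move=> ab; rewrite indicE; case: (boolP (x \in _)).
  by move=> _; rewrite /= /ramp /hcl; repeat case: ifP => ?; lra.
rewrite notin_setE /= => /negP; rewrite -ltNge => xb.
have h : 0 < b - a by rewrite subr_gt0.
have s1 : (b - x) / (b - a) <= 0 by rewrite ler_pdivrMr // mul0r; lra.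
rewrite /ramp /hcl; repeat case: ifP => ?; lra.
Qed.

Lemma meas_le d (T : measurableType d) (Y : T -> R) (y : R) :
  measurable_fun setT Y -> measurable [set w | Y w <= y].
Proof.
move=> mY; have := mY measurableT _ (measurable_itv `]-oo, y]).
rewrite setTI; congr measurable; apply/seteqP; split => w /=;
  by rewrite in_itv /=.
Qed.

Lemma ind_meas y : measurable_fun setT (\1_[set x : R | x <= y] : R -> R).
Proof. apply: measurable_indic; apply: (@meas_le _ R id) => //. Qed.


Lemma ind_comp (T : Type) (Y : T -> R) y w :
  \1_[set w | Y w <= y] w = \1_[set x : R | x <= y] (Y w) :> R.
Proof. by []. Qed.

Lemma int_le d (T : measurableType d) (mu : probability T R) (Y : T -> R)
  (mY : measurable_fun setT Y) (g1 g2 : R -> R) :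
  measurable_fun setT g1 -> measurable_fun setT g2 ->
  (forall x, 0 <= g1 x) -> (forall x, g1 x <= g2 x) ->
  (\int[mu]_w (g1 (Y w))%:E <= \int[mu]_w (g2 (Y w))%:E)%E.
Proof.
move=> m1 m2 g10 g12; apply: ge0_le_integral => //.
- by move=> w _; rewrite lee_fin.
- by apply/measurable_EFinP; apply: measurableT_comp.
- by apply/measurable_EFinP; apply: measurableT_comp.
- by move=> w _; rewrite lee_fin.
Qed.

Lemma int_ind d (T : measurableType d) (mu : probability T R) (Y : T -> R)
  (mY : measurable_fun setT Y) y :
  (\int[mu]_w (\1_[set x : R | (x <= y)%R] (Y w))%:E = mu [set w | (Y w <= y)%R])%E.
Proof.
under eq_integral do rewrite -ind_comp.
by rewrite integral_indic ?setIT //; exact: meas_le.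
Qed.

Lemma int_ind01 d (T : measurableType d) (mu : probability T R) (Y : T -> R)
  (mY : measurable_fun setT Y) y :
  (0 <= \int[mu]_w (\1_[set x : R | (x <= y)%R] (Y w))%:E <= 1)%E.
Proof.
rewrite int_ind // measure_ge0 /=; apply: probability_le1; exact: meas_le.
Qed.

Lemma int_neg d (T : measurableType d) (mu : probability T R) (Y : T -> R)
  (g : R -> R) : (forall x, 0 <= g x) ->
  (\int[mu]_w (- g (Y w))%:E = - \int[mu]_w (g (Y w))%:E)%E.
Proof.
move=> g0; under eq_integral do rewrite EFinN.
apply: integralN; apply: fin_num_adde_defl; rewrite fin_numN.
rewrite (eq_integral (cst 0%E)) ?integral0 //.
apply: ge0_funenegE => w _; by rewrite lee_fin.
Qed.

Lemma sup_mono (I : Type) (D : set I) (f g : I -> \bar R) :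
  (forall i, D i -> f i <= g i)%E ->
  (ereal_sup [set f i | i in D] <= ereal_sup [set g i | i in D])%E.
Proof.
move=> fg; apply/ereal_supP => _ [i Di <-]; apply: le_trans (fg i Di) _.
by apply: le_ereal_sup_tmp; exists (g i) => //; exists i.
Qed.

Lemma inf_mono (I : Type) (D : set I) (f g : I -> \bar R) :
  (forall i, D i -> f i <= g i)%E ->
  (ereal_inf [set f i | i in D] <= ereal_inf [set g i | i in D])%E.
Proof.
move=> fg; apply/ereal_infP => _ [i Di <-]; apply: le_trans _ (fg i Di).
by apply: ge_ereal_inf; exists (f i) => //; exists i.
Qed.

Lemma inf_negsup (I : Type) (D : set I) (f : I -> \bar R) :
  ereal_inf [set f i | i in D] = (- ereal_sup [set - f i | i in D])%E.
Proof. by rewrite ereal_infEN image_comp. Qed.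

Lemma sup_fin (I : Type) (D : set I) (f : I -> \bar R) i0 : D i0 ->
  (forall i, D i -> 0 <= f i <= 1)%E ->
  ereal_sup [set f i | i in D] \is a fin_num.
Proof.
move=> Di0 f01; apply: fin_real; apply/andP; split.
  apply: (@lt_le_trans _ _ 0%E); first exact: ltNyr.
  apply: le_ereal_sup_tmp; exists (f i0); first by exists i0.
  by case/andP: (f01 _ Di0).
apply: (@le_lt_trans _ _ 1%E); last exact: ltry.
by apply/ereal_supP => _ [i Di <-]; case/andP: (f01 _ Di).
Qed.

Lemma inf_fin (I : Type) (D : set I) (f : I -> \bar R) i0 : D i0 ->
  (forall i, D i -> 0 <= f i <= 1)%E ->
  ereal_inf [set f i | i in D] \is a fin_num.
Proof.
move=> Di0 f01; apply: fin_real; apply/andP; split.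
  apply: (@lt_le_trans _ _ 0%E); first exact: ltNyr.
  by apply/ereal_infP => _ [i Di <-]; case/andP: (f01 _ Di).
apply: (@le_lt_trans _ _ 1%E); last exact: ltry.
apply: ge_ereal_inf; exists (f i0); first by exists i0.
by case/andP: (f01 _ Di0).
Qed.

Lemma sandwich (F : R -> R) (y : R) (G : \bar R) :
  {for y, continuous F} ->
  (forall e, 0 < e -> (G <= (F (y + e))%:E)%E /\ ((F (y - e))%:E <= G)%E) ->
  (F y)%:E = G.
Proof.
move=> cF H.
have cont : forall eta, 0 < eta -> exists2 d, 0 < d &
    forall z, y - d < z < y + d -> F y - eta < F z < F y + eta.
  move=> eta eta0; have := cF; move=> /cvgrPdist_lt /(_ eta eta0) h.
  have [d /= d0 Hd] := (nbhs_ballP _ _).1 h; exists d => // z yz.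
  by rewrite -ltr_distlC; apply: Hd; rewrite /ball /= ltr_distlC.
case: G H => [g| |] H; last 2 first.
- by have [/= + _] := H 1 ltr01; rewrite leye_eq.
- by have [_ /=] := H 1 ltr01; rewrite leeNy_eq.
congr (_%:E); apply/eqP; rewrite eq_le; apply/andP; split.
  apply/ler_addgt0Pr => eta eta0.
  have [d d0 Hd] := cont eta eta0.
  have [_] := H (d / 2) (divr_gt0 d0 (ltr0Sn _ 1)); rewrite lee_fin => h.
  have /andP[h1 h2] : F y - eta < F (y - d / 2) < F y + eta.
    by apply: Hd; apply/andP; split; lra.
  lra.
apply/ler_addgt0Pr => eta eta0.
have [d d0 Hd] := cont eta eta0.
have [+ _] := H (d / 2) (divr_gt0 d0 (ltr0Sn _ 1)); rewrite lee_fin => h.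
have /andP[h1 h2] : F y - eta < F (y + d / 2) < F y + eta.
  by apply: Hd; apply/andP; split; lra.
lra.
Qed.

End H.

Lemma Clip_cst (R : realType) (c : R) : Clip (fun _ : R => c).
Proof.
exists 1, 0%N; split => // x z; rewrite subrr normr0.
by rewrite !mulr_ge0 // !addr_ge0.
Qed.

Lemma Clip_neg (R : realType) (phi : R -> R) : Clip phi -> Clip (fun x => - phi x).
Proof.
case=> C [k [C0 H]]; exists C, k; split => // x z.
by rewrite -opprD normrN; exact: H.
Qed.

Lemma ind_ge0 (R : realType) (y x : R) : 0 <= \1_[set x : R | x <= y] x :> R.
Proof. by rewrite indicE ler0n. Qed.

Ltac solve_il := apply: int_le => //; try solve [exact: ind_meas | exact: ramp_meas | exact: ind_ge0 | exact: ramp_ge0 | move=> ?; exact: ind_le_ramp | move=> ?; exact: ramp_le_ind].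

Unset Implicit Arguments.

Theorem mainTheorem11 (R : realType)
  (d : measure_display) (T : measurableType d) (Pset : set (probability T R))
  (X : T -> R) (mX : measurable_fun setT X)
  (* X lies in the sublinear expectation space: phi(X) is integrable under
     every Q in Pset and Ehat[phi(X)] is finite, for all phi in C_{l.Lip} *)
  (hint : forall phi : R -> R, Clip phi ->
     forall Q, Pset Q -> Q.-integrable setT (fun w => (phi (X w))%:E))
  (hfin : forall phi : R -> R, Clip phi ->
     sublin_exp Pset (fun w => (phi (X w))%:E) \is a fin_num)
  (d' : measure_display) (T' : measurableType d') (P : probability T' R)
  (A : Type) (Xa : A -> T' -> R) (mXa : forall a, measurable_fun setT (Xa a))
  (hrep : forall phi : R -> R, Clip phi ->
     sublin_exp Pset (fun w => (phi (X w))%:E) =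
     ereal_sup [set (\int[P]_w (phi (Xa a w))%:E)%E | a in [set: A]]) :
  (forall y : R, {for y, continuous (upper_cdf Pset X)} ->
     (upper_cdf Pset X y)%:E =
     ereal_sup [set P [set w | Xa a w <= y] | a in [set: A]]) /\
  (forall y : R, {for y, continuous (lower_cdf Pset X)} ->
     (lower_cdf Pset X y)%:E =
     ereal_inf [set P [set w | Xa a w <= y] | a in [set: A]]).
Proof.
have [Q0 PQ0] : exists Q, Pset Q.
  case: (pselect (exists Q, Pset Q)) => // nP; exfalso.
  have := hfin _ (Clip_cst 0).
  have -> : Pset = set0 by apply/seteqP; split => // Q PQ; apply: nP; exists Q.
  by rewrite /sublin_exp image_set0 ereal_sup0.
have hsup : forall phi, Clip phi ->
    ereal_sup [set (\int[Q]_w (phi (X w))%:E)%E | Q in Pset] =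
    ereal_sup [set (\int[P]_w (phi (Xa a w))%:E)%E | a in [set: A]].
  by move=> phi cphi; rewrite -hrep.
have hinf : forall phi, Clip phi -> (forall x, 0 <= phi x) ->
    ereal_inf [set (\int[Q]_w (phi (X w))%:E)%E | Q in Pset] =
    ereal_inf [set (\int[P]_w (phi (Xa a w))%:E)%E | a in [set: A]].
  move=> phi cphi phi0; rewrite !inf_negsup; congr (- _)%E.
  transitivity (sublin_exp Pset (fun w => (- phi (X w))%:E)).
    rewrite /sublin_exp; congr ereal_sup; apply: eq_imagel => Q _.
    by rewrite int_neg.
  rewrite (hrep _ (Clip_neg cphi)); congr ereal_sup; apply: eq_imagel => a _.
  by rewrite int_neg.
have Fu : forall z, (upper_cdf Pset X z)%:E =
    ereal_sup [set (\int[Q]_w (\1_[set x : R | x <= z] (X w))%:E)%E | Q in Pset].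
  move=> z; rewrite /upper_cdf /sublin_exp fineK //.
  by apply: (sup_fin PQ0) => Q PQ; exact: int_ind01.
have Fl : forall z, (lower_cdf Pset X z)%:E =
    ereal_inf [set (\int[Q]_w (\1_[set x : R | x <= z] (X w))%:E)%E | Q in Pset].
  move=> z; rewrite /lower_cdf /sublin_exp.
  have -> : [set (\int[Q]_w (- (\1_[set w | X w <= z] w)%:E))%E | Q in Pset] =
      [set (- \int[Q]_w (\1_[set x : R | x <= z] (X w))%:E)%E | Q in Pset].
    apply: eq_imagel => Q _; rewrite -int_neg; last exact: ind_ge0.
    by apply: eq_integral => w _; rewrite EFinN.
  rewrite -inf_negsup fineK //.
  by apply: (inf_fin PQ0) => Q PQ; exact: int_ind01.
have Pind : forall y, [set P [set w | Xa a w <= y] | a in [set: A]] =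
    [set (\int[P]_w (\1_[set x : R | x <= y] (Xa a w))%:E)%E | a in [set: A]].
  by move=> y; apply: eq_imagel => a _; rewrite int_ind.
split => y cy; rewrite Pind; apply: sandwich => // e e0.
  have h1 : y < y + e by lra.
  have h2 : y - e < y by lra.
  split.
    rewrite Fu; apply: le_trans (_ : (_ <= ereal_sup
       [set (\int[P]_w (ramp y (y + e) (Xa a w))%:E)%E | a in [set: A]])%E) _.
      apply: sup_mono => a _; solve_il.
    rewrite -hsup; last exact: ramp_Clip.
    apply: sup_mono => Q _; solve_il.
  rewrite Fu; apply: le_trans (_ : (_ <= ereal_sup
     [set (\int[Q]_w (ramp (y - e) y (X w))%:E)%E | Q in Pset])%E) _.
    apply: sup_mono => Q _; solve_il.
  rewrite hsup; last exact: ramp_Clip.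
  apply: sup_mono => a _; solve_il.
have h1 : y < y + e by lra.
have h2 : y - e < y by lra.
split.
  rewrite Fl; apply: le_trans (_ : (_ <= ereal_inf
     [set (\int[P]_w (ramp y (y + e) (Xa a w))%:E)%E | a in [set: A]])%E) _.
    apply: inf_mono => a _; solve_il.
  rewrite -hinf; [|exact: ramp_Clip|exact: ramp_ge0].
  apply: inf_mono => Q _; solve_il.
rewrite Fl; apply: le_trans (_ : (_ <= ereal_inf
   [set (\int[Q]_w (ramp (y - e) y (X w))%:E)%E | Q in Pset])%E) _.
  apply: inf_mono => Q _; solve_il.
rewrite hinf; [|exact: ramp_Clip|exact: ramp_ge0].
apply: inf_mono => a _; solve_il.
Qed.
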